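(* Any decomposable sum-product network (SPN) can be represented by a stochastic context-free And-Or grammar whose size is linear in the size of the SPN, in the sense that for every assignment to the random variables, the marginal probability computed by the And-Or grammar equals the probability computed by the SPN.
   Context: A sum-product network over random variables $x_1,\dots,x_d$ is a rooted directed acyclic graph whose leaves are indicators $x_i$ or $\bar x_i$ and whose non-leaf nodes are sum nodes (computing a weighted sum of their children) or product nodes (computing the product of their children); its value is that of its root. The scope of a node is the set of variables appearing in its descendant leaves. For validity, children of a sum node have identical scopes and children of a product node contain no conflicting leaves ($x_i$ in one, $\bar x_i$ in another). An SPN is decomposable if the children of every product node have disjoint scopes. The probability computed by the SPN refers to its (normalized) distribution. A stochastic context-free And-Or grammar (AOG) is a tuple $\langle \Sigma, N, S, \theta, R\rangle$: terminal nodes $\Sigma$; nonterminal nodes $N$ partitioned into And-nodes and Or-nodes; start symbol $S$; $\theta$ maps each instance of a node $x$ to a parameter $\theta_x$; $R$ is partitioned into And-rules and Or-rules. An And-rule $\langle A\to\{x_1,\dots,x_n\}, t, f\rangle$ ($n\ge2$) has a parameter relation $t(\theta_{x_1},\dots,\theta_{x_n})$ and parameter function $\theta_A=f(\theta_{x_1},\dots,\theta_{x_n})$; each And-node heads exactly one And-rule. An Or-rule $\langle O\to x, p\rangle$ has conditional probability $p$ and requires $\theta_O=\theta_x$. A parse of a data sample (a set of terminal instances) is a tree rooted at an instance of $S$ with leaves exactly the sample, And-node instances expanded by their And-rule subject to the parameter relation/function, Or-node instances by exactly one Or-rule with equal parameter; its probability is the product of used Or-rule probabilities, and the marginal probability of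 a sample is the sum over its parses. *)

(* Defs.v *)
From HB Require Import structures.
From mathcomp Require Import all_boot all_order all_algebra.
From Stdlib Require List Permutation.
Set Implicit Arguments. Unset Strict Implicit. Unset Printing Implicit Defensive.
Import Order.TTheory GRing.Theory Num.Theory.
Local Open Scope ring_scope.

(* An SPN is a list of nodes in topological order; children of node k  *)
(* are referred to by their (nat) index, which must be < k.  The root  *)
(* is the last node.                                                    *)

Inductive snode (d : nat) (R : Type) :=
  | SLeaf of 'I_d & bool                 (* SLeaf i true = x_i, SLeaf i false = \bar x_i *)
  | SSum of seq (nat * R)               (* (child index, weight) *)
  | SProd of seq nat.

Definition spn (d : nat) (R : Type) := seq (snode d R).

Section SPN.
Variables (d : nat) (R : realFieldType).
Implicit Types (S : spn d R) (x : {ffun 'I_d -> bool}).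

Definition node_children (n : snode d R) : seq nat :=
  match n with
  | SLeaf _ _ => [::]
  | SSum ch => map fst ch
  | SProd ch => ch
  end.

Definition wf_spn S : Prop :=
  (0 < size S)%N /\
  forall k, (k < size S)%N ->
    match nth (SProd d R [::]) S k with
    | SLeaf _ _ => True
    | SSum ch => (0 < size ch)%N /\ all (fun c => c.1 < k)%N ch /\ all (fun c => 0 < c.2) ch
    | SProd ch => (0 < size ch)%N /\ all (fun c => c < k)%N ch
    end.

Definition node_val x (vs : seq R) (n : snode d R) : R :=
  match n with
  | SLeaf i b => (x i == b)%:R
  | SSum ch => \sum_(c <- ch) c.2 * nth 0 vs c.1
  | SProd ch => \prod_(c <- ch) nth 0 vs c
  end.

Definition node_vals S x : seq R :=
  foldl (fun vs n => rcons vs (node_val x vs n)) [::] S.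

Definition spn_val S x : R := last 0 (node_vals S x).

Definition spn_prob S x : R :=
  spn_val S x / \sum_(y : {ffun 'I_d -> bool}) spn_val S y.

Definition node_scope (ss : seq {set 'I_d}) (n : snode d R) : {set 'I_d} :=
  match n with
  | SLeaf i _ => [set i]
  | _ => \bigcup_(c <- node_children n) nth set0 ss c
  end.

Definition scopes S : seq {set 'I_d} :=
  foldl (fun ss n => rcons ss (node_scope ss n)) [::] S.

Definition scope_of S (k : nat) : {set 'I_d} := nth set0 (scopes S) k.

Definition complete_spn S : Prop :=
  forall k, (k < size S)%N ->
    match nth (SProd d R [::]) S k with
    | SSum ch => forall c1 c2, c1 \in ch -> c2 \in ch ->
                   scope_of S c1.1 = scope_of S c2.1
    | _ => True
    end.

Definition decomposable_spn S : Prop :=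
  forall k, (k < size S)%N ->
    match nth (SProd d R [::]) S k with
    | SProd ch => forall j1 j2, (j1 < size ch)%N -> (j2 < size ch)%N -> j1 <> j2 ->
                   [disjoint scope_of S (nth 0%N ch j1) & scope_of S (nth 0%N ch j2)]
    | _ => True
    end.

Definition full_scope_spn S : Prop := scope_of S (size S).-1 = setT.

Definition spn_size S : nat := size S + \sum_(n <- S) size (node_children n).

End SPN.

(* Terminal nodes are naturals 0..nterm-1, nonterminals 0..nnt-1;       *)
(* a symbol is inl a (terminal a) or inr k (nonterminal k).             *)
(* Each And-node k heads exactly one And-rule k -> and_ch k with        *)
(* parameter relation and_rel k and parameter function and_fun k.       *)
(* Or-rules are triples (O, x, p) : O -> x with probability p.           *)

Definition symbol := (nat + nat)%type.

Record aog (P : Type) (R : realFieldType) := AOG {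
  nterm : nat;
  nnt : nat;
  isAnd : nat -> bool;
  start : nat;
  and_ch : nat -> seq symbol;
  and_rel : nat -> seq P -> bool;
  and_fun : nat -> seq P -> P;
  or_rules : seq (nat * symbol * R)
}.

Section AOG.
Variables (P : Type) (R : realFieldType) (G : aog P R).

Definition sym_ok (s : symbol) : bool :=
  match s with inl a => (a < nterm G)%N | inr k => (k < nnt G)%N end.

Definition or_prob_sum (k : nat) : R :=
  \sum_(r <- or_rules G | r.1.1 == k) r.2.

Definition stochastic_aog : Prop :=
  [/\ (start G < nnt G)%N,
      (forall k, (k < nnt G)%N -> isAnd G k ->
         (2 <= size (and_ch G k))%N /\ all sym_ok (and_ch G k)),
      (forall r, r \in or_rules G ->
         [/\ (r.1.1 < nnt G)%N, ~~ isAnd G r.1.1, sym_ok r.1.2 & 0 <= r.2]) &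
      (forall k, (k < nnt G)%N -> ~~ isAnd G k -> or_prob_sum k = 1)].

Definition aog_size : nat :=
  nterm G + nnt G
  + \sum_(k < nnt G | isAnd G k) (size (and_ch G k)).+1
  + 2 * size (or_rules G).

(* parse trees: terminal instance (a, theta), an And-node instance with its
   children, or an Or-node instance using the Or-rule with index r *)
Inductive ptree :=
  | PT of nat & P
  | PA of nat & seq ptree
  | PO of nat & nat & ptree.

Definition psym (t : ptree) : symbol :=
  match t with PT a _ => inl a | PA A _ => inr A | PO o _ _ => inr o end.

Fixpoint param (t : ptree) : P :=
  match t with
  | PT _ th => th
  | PA A ch => and_fun G A (map param ch)
  | PO _ _ c => param c
  end.

Fixpoint pleaves (t : ptree) : seq (nat * P) :=
  match t with
  | PT a th => [:: (a, th)]
  | PA _ ch => flatten (map pleaves ch)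
  | PO _ _ c => pleaves c
  end.

Definition or_rule0 : nat * symbol * R := (0%N, inl 0%N, 0).

Fixpoint pvalid (t : ptree) : bool :=
  match t with
  | PT a _ => (a < nterm G)%N
  | PA A ch => [&& (A < nnt G)%N, isAnd G A, map psym ch == and_ch G A,
                 and_rel G A (map param ch) & all id (map pvalid ch)]
  | PO o r c => [&& (o < nnt G)%N, ~~ isAnd G o, (r < size (or_rules G))%N,
                 (nth or_rule0 (or_rules G) r).1.1 == o,
                 (nth or_rule0 (or_rules G) r).1.2 == psym c & pvalid c]
  end.

Fixpoint pprob (t : ptree) : R :=
  match t with
  | PT _ _ => 1
  | PA _ ch => foldr *%R 1 (map pprob ch)
  | PO _ r c => (nth or_rule0 (or_rules G) r).2 * pprob c
  end.

(* t is a parse of the data sample s (a multiset of terminal instances) *)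
Definition is_parse (s : seq (nat * P)) (t : ptree) : Prop :=
  [/\ pvalid t, psym t = inr (start G) & Permutation.Permutation (pleaves t) s].

Definition parse_partial_sum (s : seq (nat * P)) (u : R) : Prop :=
  exists l : seq ptree, List.NoDup l /\ (forall t, List.In t l -> is_parse s t)
                        /\ u = \sum_(t <- l) pprob t.

(* v is the marginal probability of s: the sum over all its parses,
   i.e. the supremum of the finite partial sums *)
Definition aog_marginal (s : seq (nat * P)) (v : R) : Prop :=
  (forall u, parse_partial_sum s u -> u <= v) /\
  (forall w, (forall u, parse_partial_sum s u -> u <= w) -> v <= w).

End AOG.

(* The terminal node for literal x_i is 2i, for \bar x_i it is 2i+1. *)
Definition lit_term (d : nat) (i : 'I_d) (b : bool) : nat := (2 * i + ~~ b)%N.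

Definition sample_of (d : nat) (x : {ffun 'I_d -> bool}) : seq (nat * unit) :=
  [seq (lit_term i (x i), tt) | i <- enum 'I_d].

(* Main.v *)
Require Import Defs.
From HB Require Import structures.
From mathcomp Require Import all_boot all_order all_algebra.
From mathcomp Require Import zify ring lra.
From Stdlib Require Import Permutation.
Set Implicit Arguments. Unset Strict Implicit. Unset Printing Implicit Defensive.
Import Order.TTheory GRing.Theory Num.Theory.
Local Open Scope ring_scope.


Lemma In_map (T U : Type) (f : T -> U) (y : U) (s : seq T) :
  List.In y (map f s) <-> exists x, List.In x s /\ y = f x.
Proof.
elim: s => [|z s IH] /=; first by split=> // -[x []].
rewrite IH; split.
- by case=> [<-|[x [Hx ->]]]; [exists z; tauto | exists x; tauto].
- by case=> x [[<-|Hx] ->]; [left | right; exists x].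
Qed.


Section Lists.
Variable T : Type.

Lemma In_cat (x : T) (s1 s2 : seq T) : List.In x (s1 ++ s2) <-> List.In x s1 \/ List.In x s2.
Proof. elim: s1 => [|y s1 IH] /=; first by tauto. rewrite IH; tauto. Qed.

Lemma In_flatten (y : T) (ss : seq (seq T)) :
  List.In y (flatten ss) <-> exists s, List.In s ss /\ List.In y s.
Proof.
elim: ss => [|s ss IH] /=; first by split=> // -[x []].
rewrite In_cat IH; split.
- by case=> [H|[s' [H1 H2]]]; [exists s; tauto | exists s'; tauto].
- by case=> s' [[<-|H1] H2]; [left | right; exists s'].
Qed.

Lemma NoDup_cat (s1 s2 : seq T) : List.NoDup s1 -> List.NoDup s2 ->
  (forall a, List.In a s1 -> ~ List.In a s2) -> List.NoDup (s1 ++ s2).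
Proof.
elim: s1 => [|x s1 IH] //= H1 H2 H3.
inversion H1; subst. constructor.
- rewrite In_cat => -[//|]. by apply: H3; left.
- apply: IH => // a Ha; apply: H3; by right.
Qed.

Lemma NoDup_flatten_map (I : Type) (h : I -> seq T) (rs : seq I) :
  List.NoDup rs -> (forall r, List.In r rs -> List.NoDup (h r)) ->
  (forall r r' y, List.In r rs -> List.In r' rs -> List.In y (h r) -> List.In y (h r') -> r = r') ->
  List.NoDup (flatten (map h rs)).
Proof.
elim: rs => [|r rs IH] /= H1 H2 H3; first by constructor.
inversion H1; subst.
apply: NoDup_cat; first by apply: H2; left.
- apply: IH => //; first by move=> r' Hr'; apply: H2; right.
  by move=> r1 r2 y Hr1 Hr2; apply: (H3 r1 r2 y (or_intror Hr1) (or_intror Hr2)).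
- move=> a Ha Hin; have [s [Hs Ha']] := proj1 (In_flatten _ _) Hin.
  have [r' [Hr' Es]] := proj1 (In_map _ _ _) Hs; subst s.
  have E := H3 r r' a (or_introl erefl) (or_intror Hr') Ha Ha'.
  by subst.
Qed.

Lemma NoDup_map_inj (U : Type) (f : T -> U) (s : seq T) :
  injective f -> List.NoDup s -> List.NoDup (map f s).
Proof.
move=> inj; elim: s => [|x s IH] /= H; first by constructor.
inversion H; subst; constructor; last exact: IH.
by move/In_map=> [y [Hy /inj E]]; subst.
Qed.

Lemma In_split (t : T) (L : seq T) : List.In t L -> exists L1 L2, L = L1 ++ t :: L2.
Proof.
elim: L => [|x L IH] //= [->|/IH [L1 [L2 ->]]]; first by exists [::], L.
by exists (x :: L1), L2.
Qed.

Lemma sum_ge0_In (R : numDomainType) (F : T -> R) (L : seq T) :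
  (forall t, List.In t L -> 0 <= F t) -> 0 <= \sum_(t <- L) F t.
Proof.
elim: L => [|x L IH] H; first by rewrite big_nil.
rewrite big_cons addr_ge0 //; first by apply: H; left.
by apply: IH => t Ht; apply: H; right.
Qed.

Lemma sum_le_NoDup (R : numDomainType) (F : T -> R) (l L : seq T) :
  (forall t, List.In t L -> 0 <= F t) -> List.NoDup l ->
  (forall t, List.In t l -> List.In t L) ->
  \sum_(t <- l) F t <= \sum_(t <- L) F t.
Proof.
elim: l L => [|t l IH] L Hpos Hnd Hin.
  by rewrite big_nil; apply: sum_ge0_In.
have [L1 [L2 EL]] := In_split (Hin t (or_introl erefl)).
inversion Hnd; subst.
rewrite big_cons !big_cat big_cons /= addrCA lerD2l -big_cat /=.
apply: IH.
- move=> y Hy; apply: Hpos; rewrite In_cat /=; move/In_cat: Hy; tauto.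
- done.
- move=> y Hy; have := Hin y (or_intror Hy); rewrite In_cat /= => -[|[E|]].
  + by rewrite In_cat; left.
  + by subst.
  + by rewrite In_cat; right.
Qed.

Lemma In_filter (p : pred T) (x : T) (s : seq T) : List.In x (filter p s) <-> List.In x s /\ p x.
Proof.
elim: s => [|y s IH] /=; first by tauto.
case: ifP => Hy /=; rewrite IH; split.
- by case=> [<-|[H1 H2]]; split; auto.
- by case=> [[<-|H1] H2]; auto.
- by case=> H1 H2; auto.
- case=> [[E|H1] H2]; last by auto.
  by subst; rewrite Hy in H2.
Qed.

Lemma NoDup_filter' (p : pred T) (s : seq T) : List.NoDup s -> List.NoDup (filter p s).
Proof.
elim: s => [|y s IH] //= H; inversion H; subst; case: ifP => _; last exact: IH.
constructor; last exact: IH. by rewrite In_filter; tauto.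
Qed.

End Lists.

Lemma In_mem (T : eqType) (x : T) (s : seq T) : List.In x s <-> x \in s.
Proof.
elim: s => [|y s IH] //=; rewrite in_cons IH; split.
- by case=> [->|->]; rewrite ?eqxx ?orbT.
- by case/orP=> [/eqP->|]; [left|right].
Qed.

Lemma uniq_NoDup (T : eqType) (s : seq T) : uniq s -> List.NoDup s.
Proof.
elim: s => [|y s IH] /=; first by constructor.
by case/andP=> H1 H2; constructor; [rewrite In_mem; apply/negP | exact: IH].
Qed.

Lemma cat_app (T : Type) (s t : seq T) : s ++ t = List.app s t.
Proof. by elim: s => //= x s ->. Qed.

Lemma perm_Permutation (T : eqType) (s t : seq T) : perm_eq s t -> Permutation s t.
Proof.
elim: s t => [|x s IH] t H.
  by rewrite perm_sym in H; move/perm_nilP: H => ->; constructor.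
have Ht : x \in t by rewrite -(perm_mem H) mem_head.
move: H; case/splitPr: Ht => t1 t2 H.
have H2 : perm_eq (t1 ++ x :: t2) (x :: t1 ++ t2) by rewrite -cat1s perm_catCA.
move: (seq.perm_trans H H2); rewrite perm_cons => /IH {}H.
rewrite cat_app; apply: Permutation_cons_app; by rewrite -cat_app.
Qed.


Section Fold.
Variables (A B : Type) (F : seq A -> B -> A).
Definition fr (s : seq B) := foldl (fun acc n => rcons acc (F acc n)) [::] s.

Lemma fr_rcons s n : fr (rcons s n) = rcons (fr s) (F (fr s) n).
Proof. by rewrite /fr foldl_rcons. Qed.

Lemma size_fr s : size (fr s) = size s.
Proof. elim/last_ind: s => [|s n IH] //; by rewrite fr_rcons !size_rcons IH. Qed.

Lemma nth_fr a0 b0 s k : (k < size s)%N -> nth a0 (fr s) k = F (fr (take k s)) (nth b0 s k).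
Proof.
elim/last_ind: s k => [|s n IH] k //; rewrite size_rcons ltnS leq_eqVlt => /orP[/eqP->|Hk].
  rewrite fr_rcons nth_rcons size_fr ltnn eqxx -cats1 take_size_cat //.
  by rewrite cats1 nth_rcons ltnn eqxx.
rewrite fr_rcons nth_rcons size_fr Hk IH // -cats1 takel_cat ?(ltnW Hk) //.
by rewrite cats1 nth_rcons Hk.
Qed.

Lemma nth_fr_take a0 s k c : (c < k)%N -> (c < size s)%N ->
  nth a0 (fr (take k s)) c = nth a0 (fr s) c.
Proof.
move=> Hck Hcs.
have b0 : B by case: s Hcs => // b _ _; exact b.
have Hc' : (c < size (take k s))%N by rewrite size_take; case: ifP => // _.
rewrite (nth_fr a0 b0 Hc') (nth_fr a0 b0 Hcs) take_takel ?(ltnW Hck) //.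
by rewrite nth_take.
Qed.
End Fold.

Section SPNval.
Variables (R : realFieldType) (d : nat) (S : spn d R).
Local Notation nd0 := (SProd d R [::]).

Definition gnode_val (f : 'I_d -> bool -> bool) (vs : seq R) (n : snode d R) : R :=
  match n with
  | SLeaf i b => (f i b)%:R
  | SSum ch => \sum_(c <- ch) c.2 * nth 0 vs c.1
  | SProd ch => \prod_(c <- ch) nth 0 vs c
  end.

Definition gv f k := nth 0 (fr (gnode_val f) S) k.

Lemma node_vals_gv x : node_vals S x = fr (gnode_val (fun i b => x i == b)) S.
Proof. by []. Qed.

Lemma wf_node (wf : wf_spn S) k : (k < size S)%N ->
  match nth nd0 S k with
  | SLeaf _ _ => True
  | SSum ch => (0 < size ch)%N /\ (forall c, c \in ch -> c.1 < k)%N /\ (forall c, c \in ch -> 0 < c.2)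
  | SProd ch => (0 < size ch)%N /\ (forall c, c \in ch -> c < k)%N
  end.
Proof.
move=> Hk; have := (proj2 wf) k Hk; case: (nth nd0 S k) => //.
  by move=> ch [H1 [/allP H2 /allP H3]].
by move=> ch [H1 /allP H2].
Qed.

Lemma gv_node (wf : wf_spn S) f k : (k < size S)%N ->
  gv f k = match nth nd0 S k with
           | SLeaf i b => (f i b)%:R
           | SSum ch => \sum_(c <- ch) c.2 * gv f c.1
           | SProd ch => \prod_(c <- ch) gv f c
           end.
Proof.
move=> Hk; have W := wf_node wf Hk.
rewrite /gv (nth_fr (gnode_val f) 0 nd0 Hk); case: (nth nd0 S k) W => //=.
  move=> ch [_ [H _]]; apply: eq_big_seq => c Hc; congr (_ * _).
  by apply: nth_fr_take; [apply: H | apply: ltn_trans (H c Hc) Hk].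
move=> ch [_ H]; apply: eq_big_seq => c Hc.
by apply: nth_fr_take; [apply: H | apply: ltn_trans (H c Hc) Hk].
Qed.

Definition sc k := scope_of S k.

Lemma sc_node (wf : wf_spn S) k : (k < size S)%N ->
  sc k = match nth nd0 S k with
           | SLeaf i b => [set i]
           | SSum ch => \bigcup_(c <- map fst ch) sc c
           | SProd ch => \bigcup_(c <- ch) sc c
           end.
Proof.
move=> Hk; have W := wf_node wf Hk.
rewrite /sc /scope_of /scopes.
rewrite (nth_fr (fun ss n => node_scope ss n) set0 nd0 Hk); case: (nth nd0 S k) W => //=.
  move=> ch [_ [H _]]; rewrite !big_map; apply: eq_big_seq => c Hc.
  by apply: nth_fr_take; [apply: H | apply: ltn_trans (H c Hc) Hk].
move=> ch [_ H]; apply: eq_big_seq => c Hc.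
by apply: nth_fr_take; [apply: H | apply: ltn_trans (H c Hc) Hk].
Qed.

Definition ftrue : 'I_d -> bool -> bool := fun _ _ => true.
Definition u k := gv ftrue k.

Lemma u_gt0 (wf : wf_spn S) k : (k < size S)%N -> 0 < u k.
Proof.
elim/ltn_ind: k => k IH Hk; have W := wf_node wf Hk.
rewrite /u gv_node //; case: (nth nd0 S k) W => /=.
- by move=> _ _ _; rewrite ltr01.
- move=> ch [H0 [H1 H2]]; case: ch H0 H1 H2 => // c ch _ H1 H2.
  have Hpos c' : c' \in c :: ch -> 0 < c'.2 * gv ftrue c'.1.
    move=> Hc'; rewrite mulr_gt0 ?H2 //; apply: IH; first exact: H1.
    exact: ltn_trans (H1 c' Hc') Hk.
  rewrite big_cons; apply: (lt_le_trans (Hpos c (mem_head _ _))); rewrite lerDl.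
  rewrite big_seq; apply: sumr_ge0 => c' Hc'; apply: ltW; apply: Hpos.
  by rewrite in_cons Hc' orbT.
- move=> ch [_ H1]; rewrite big_seq; apply: prodr_gt0 => c Hc.
  by apply: IH; [apply: H1 | apply: ltn_trans (H1 c Hc) Hk].
Qed.

End SPNval.


Section Grammar.
Variables (R : realFieldType) (d : nat) (S : spn d R).
Local Notation nd0 := (SProd d R [::]).

Definition mk (ib : 'I_d * bool) : nat * unit := (lit_term ib.1 ib.2, tt).

Lemma mk_inj : injective mk.
Proof.
move=> [i b] [j c]; rewrite /mk /lit_term /= => -[].
case: b; case: c => /= E; try lia.
- by congr (_, _); apply: val_inj => /=; lia.
- by congr (_, _); apply: val_inj => /=; lia.
Qed.

Definition rules_of (k : nat) (nd : snode d R) : seq (nat * symbol * R) :=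
  match nd with
  | SLeaf i b => [:: (k, inl (lit_term i b), 1)]
  | SSum ch => [seq (k, inr c.1, c.2 * u S c.1 / u S k) | c <- ch]
  | SProd [:: c] => [:: (k, inr c, 1)]
  | SProd _ => [::]
  end.

Definition rulesS := flatten [seq rules_of k (nth nd0 S k) | k <- iota 0 (size S)].

Definition isAndS k := match nth nd0 S k with SProd ch => (1 < size ch)%N | _ => false end.
Definition and_chS k : seq symbol := match nth nd0 S k with SProd ch => map inr ch | _ => [::] end.

Definition GS : aog unit R :=
  AOG (2 * d) (size S) isAndS (size S).-1 and_chS (fun _ _ => true) (fun _ _ => tt) rulesS.

Lemma rules_of_head k nd r : r \in rules_of k nd -> r.1.1 = k.
Proof.
case: nd => [i b|ch|[|c [|c' ch]]] //=; rewrite ?inE.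
- by move/eqP->.
- by case/mapP=> c _ ->.
- by move/eqP->.
Qed.

Lemma mem_rulesS r : r \in rulesS -> exists2 k, (k < size S)%N & r \in rules_of k (nth nd0 S k).
Proof.
case/flattenP=> s /mapP [k Hk ->] Hr; exists k => //.
by move: Hk; rewrite mem_iota.
Qed.

Lemma rulesS_head k r : r \in rulesS -> r.1.1 = k -> r \in rules_of k (nth nd0 S k).
Proof.
case/mem_rulesS=> j Hj Hr E; have := rules_of_head Hr; rewrite E => E'.
by subst.
Qed.

Lemma sum_rules_head (F : nat * symbol * R -> R) k : (k < size S)%N ->
  \sum_(r <- rulesS | r.1.1 == k) F r = \sum_(r <- rules_of k (nth nd0 S k)) F r.
Proof.
move=> Hk; rewrite /rulesS big_flatten big_map.
rewrite (bigD1_seq k) ?mem_iota ?iota_uniq //= [X in _ + X]big1_seq ?addr0.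
  rewrite big_seq_cond [RHS]big_seq; apply: eq_bigl => r.
  by case Hr: (r \in _); rewrite ?andbT ?andbF // (rules_of_head Hr) eqxx.
move=> j /andP [Hj _]; rewrite big1_seq // => r /andP [/eqP Er Hr].
by have := rules_of_head Hr; rewrite Er => E; rewrite E eqxx in Hj.
Qed.

Lemma rule_props (wf : wf_spn S) r : r \in rulesS ->
  [/\ (r.1.1 < size S)%N, ~~ isAndS r.1.1,
      (match r.1.2 with inl a => a < 2 * d | inr c => c < r.1.1 end)%N & 0 <= r.2].
Proof.
case/mem_rulesS=> k Hk Hr; rewrite (rules_of_head Hr); split => //;
  have W := wf_node wf Hk; move: Hr W; rewrite /isAndS;
  case: (nth nd0 S k) => [i b|ch|[|c [|c' ch]]] //=; rewrite ?inE.
all: try (move/eqP-> => //=).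
- move=> _; rewrite /lit_term; have := ltn_ord i; case: b => /=; lia.
- by case/mapP=> c Hc -> [_ [H _]] /=; apply: H.
- by case=> _ H; apply: H; rewrite mem_head.
- case/mapP=> c Hc -> [_ [H1 H2]] /=.
  by rewrite divr_ge0 ?mulr_ge0 ?ltW ?H2 ?u_gt0 //; apply: ltn_trans (H1 c Hc) Hk.
Qed.
End Grammar.


Section Cart.
Variable T : Type.
Fixpoint cart (Ls : seq (seq T)) : seq (seq T) :=
  if Ls is L :: Ls' then flatten [seq [seq t :: ts | ts <- cart Ls'] | t <- L] else [:: [::]].

Lemma In_cart ts Ls : List.In ts (cart Ls) <-> List.Forall2 (fun t L => List.In t L) ts Ls.
Proof.
elim: Ls ts => [|L Ls IH] ts /=.
  split; first by case=> // <-; constructor.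
  by move=> H; inversion H; left.
rewrite In_flatten; split.
- case=> s [/In_map [t [Ht ->]] /In_map [ts' [Hts' ->]]].
  by constructor => //; apply/IH.
- move=> H; inversion H; subst.
  exists [seq x :: ts | ts <- cart Ls]; split; apply/In_map.
  + by exists x.
  + by exists l; split => //; apply/IH.
Qed.

Lemma NoDup_cart Ls : (forall L, List.In L Ls -> List.NoDup L) -> List.NoDup (cart Ls).
Proof.
elim: Ls => [|L Ls IH] H /=; first by constructor; [|constructor].
apply: NoDup_flatten_map.
- by apply: H; left.
- move=> t _; apply: NoDup_map_inj; first by move=> x y [].
  by apply: IH => L' HL'; apply: H; right.
- move=> r r' y _ _ /In_map [a [_ ->]] /In_map [b [_ []]] //.
Qed.

Lemma sum_cart (R : comRingType) (F : T -> R) (P : pred T) Ls :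
  \sum_(ts <- cart Ls | all P ts) \prod_(t <- ts) F t = \prod_(L <- Ls) \sum_(t <- L | P t) F t.
Proof.
elim: Ls => [|L Ls IH] /=; first by rewrite big_cons big_nil big_nil big_nil /= addr0.
rewrite big_cons big_flatten /= big_map [in RHS]big_mkcond big_distrl /=.
apply: eq_bigr => t _; rewrite big_map -IH big_distrr /=.
case: (P t) => /=.
- by apply: eq_bigr => ts _; rewrite big_cons.
- by rewrite big_pred0 // big1 // => ts _; rewrite mul0r.
Qed.
End Cart.


Section Sets.
Variables (d : nat) (X : eqType) (A : X -> {set 'I_d}).

Lemma mem_bigcup_s i (s : seq X) : (i \in \bigcup_(c <- s) A c) = has (fun c => i \in A c) s.
Proof. elim: s => [|x s IH]; by rewrite ?big_nil ?in_set0 // big_cons in_setU IH. Qed.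

Lemma bigcup_const (B : {set 'I_d}) (s : seq X) : s != [::] -> (forall c, List.In c s -> A c = B) ->
  \bigcup_(c <- s) A c = B.
Proof.
elim: s => [|x [|y s] IH] // _ H.
  by rewrite big_cons big_nil setU0; apply: H; left.
rewrite big_cons IH // ?(H x (or_introl erefl)) ?setUid //.
by move=> c Hc; apply: H; right.
Qed.

Lemma flat_enum_perm (ch : seq X) (x0 : X) :
  (forall j1 j2, (j1 < size ch)%N -> (j2 < size ch)%N -> j1 <> j2 ->
     [disjoint A (nth x0 ch j1) & A (nth x0 ch j2)]) ->
  perm_eq (flatten [seq enum (A c) | c <- ch]) (enum (\bigcup_(c <- ch) A c)).
Proof.
move=> H; apply: uniq_perm; last 2 first.
- exact: enum_uniq.
- move=> i; rewrite mem_enum mem_bigcup_s; apply/flattenP/hasP.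
  + by case=> s /mapP [c Hc ->]; rewrite mem_enum => Hi; exists c.
  + by case=> c Hc Hi; exists (enum (A c)); [apply/mapP; exists c | rewrite mem_enum].
elim: ch H => [|c ch IH] H //=.
rewrite cat_uniq enum_uniq IH; last first.
  by move=> j1 j2 H1 H2 H3; apply: (H j1.+1 j2.+1) => //; case.
rewrite andbT /=; apply/hasP => -[i /flattenP [s /mapP [c' Hc' ->]]].
rewrite !mem_enum => Hi1 Hi2.
have Hj : (index c' ch < size ch)%N by rewrite index_mem.
have := H 0%N (index c' ch).+1 isT Hj (fun E => ltac:(discriminate E)).
by rewrite /= nth_index // => /disjointFr /(_ Hi2); rewrite Hi1.
Qed.
End Sets.


Section Main.
Variables (R : realFieldType) (d : nat) (S : spn d R).
Local Notation nd0 := (SProd d R [::]).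
Local Notation G := (GS S).
Local Notation tree := (ptree unit).
Local Notation rl r := (nth (or_rule0 R) (rulesS S) r).

Definition consL (f : 'I_d -> bool -> bool) (lv : seq (nat * unit)) : bool :=
  all (fun p => [exists ib : 'I_d * bool, (p == mk ib) && f ib.1 ib.2]) lv.

Lemma consL_mk f lits : consL f (map (@mk d) lits) = all (fun ib => f ib.1 ib.2) lits.
Proof.
rewrite /consL all_map; apply: eq_all => ib /=; apply/existsP/idP.
- by case=> ib' /andP [/eqP /mk_inj <-].
- by move=> H; exists ib; rewrite eqxx.
Qed.

Definition Good c (T : seq tree) : Prop :=
  [/\ List.NoDup T,
      (forall t, List.In t T <-> pvalid G t /\ psym t = inr c),
      (forall t, List.In t T -> exists lits, pleaves t = map (@mk d) lits /\
                                  perm_eq (map fst lits) (enum (sc S c))),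
      (forall t, List.In t T -> 0 <= pprob G t) &
      (forall f, \sum_(t <- T | consL f (pleaves t)) pprob G t = gv S f c / u S c)].

Definition TR (L : seq (seq tree)) (s : symbol) : seq tree :=
  match s with inl a => [:: PT a tt] | inr c => nth [::] L c end.

Definition ORtrees L k : seq tree :=
  flatten [seq [seq PO k r t | t <- TR L (rl r).1.2] |
           r <- [seq r <- iota 0 (size (rulesS S)) | (rl r).1.1 == k]].

Lemma In_ORtrees L k t : List.In t (ORtrees L k) <->
  exists r t', [/\ t = PO k r t', (r < size (rulesS S))%N, (rl r).1.1 = k & List.In t' (TR L (rl r).1.2)].
Proof.
rewrite /ORtrees In_flatten; split.
- case=> s [/In_map [r [/In_filter [/In_mem Hr /eqP E] ->]] /In_map [t' [Ht' ->]]].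
  by exists r, t'; split => //; move: Hr; rewrite mem_iota.
- case=> r [t' [-> Hr E Ht']]; exists [seq PO k r t | t <- TR L (rl r).1.2]; split.
  + apply/In_map; exists r; split => //; apply/In_filter; split; last by rewrite E.
    by apply/In_mem; rewrite mem_iota.
  + by apply/In_map; exists t'.
Qed.

Lemma TR_props (wf : wf_spn S) L k s : (forall c, (c < k)%N -> Good c (nth [::] L c)) ->
  (match s with inl a => is_true (a < 2 * d)%N | inr c => is_true (c < k)%N end) ->
  [/\ List.NoDup (TR L s), (forall t, List.In t (TR L s) <-> pvalid G t /\ psym t = s) &
      (forall t, List.In t (TR L s) -> 0 <= pprob G t)].
Proof.
move=> IH; case: s => [a Ha | c Hc] /=; last first.
  by have [H1 H2 _ H4 _] := IH c Hc; split.
split.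
- by constructor; [|constructor].
- move=> t; split; first by case=> // <-.
  case: t => [a' [] | k' ts | o r t'] /= [Hv Hs]; try discriminate.
  by case: Hs => ->; left.
- by move=> t [<-|].
Qed.

Lemma or_step (wf : wf_spn S) (cmp : complete_spn S) L k : (k < size S)%N -> ~~ isAndS S k ->
  (forall c, (c < k)%N -> Good c (nth [::] L c)) -> Good k (ORtrees L k).
Proof.
move=> Hk HA IH.
have Hrule r : (r < size (rulesS S))%N -> (rl r).1.1 = k ->
   [/\ rl r \in rules_of S k (nth nd0 S k), 0 <= (rl r).2 &
       [/\ List.NoDup (TR L (rl r).1.2),
           (forall t, List.In t (TR L (rl r).1.2) <-> pvalid G t /\ psym t = (rl r).1.2) &
           (forall t, List.In t (TR L (rl r).1.2) -> 0 <= pprob G t)]].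
  move=> Hr E; have Hm := mem_nth (or_rule0 R) Hr.
  have [_ _ Hs Hp] := rule_props wf Hm.
  split => //; first exact: rulesS_head.
  rewrite E in Hs; exact: (TR_props wf IH Hs).
have Hf r : List.In r [seq r <- iota 0 (size (rulesS S)) | (rl r).1.1 == k] ->
    (r < size (rulesS S))%N /\ (rl r).1.1 = k.
  by move=> /In_filter [/In_mem]; rewrite mem_iota /= => Hr /eqP.
split.
- rewrite /ORtrees; apply: NoDup_flatten_map.
  + apply: NoDup_filter'; apply: uniq_NoDup; exact: iota_uniq.
  + move=> r /Hf [Hr E]; apply: NoDup_map_inj; first by move=> x y [].
    by have [_ _ []] := Hrule r Hr E.
  + by move=> r r' y _ _ /In_map [a [_ ->]] /In_map [b [_ [-> _]]].
- move=> t; rewrite In_ORtrees; split.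
  + case=> r [t' [-> Hr E Ht']]; have [_ _ [_ HT _]] := Hrule r Hr E.
    have [Hv Hs] := (HT t').1 Ht'; split => //=.
    by rewrite Hk HA Hr E eqxx Hs eqxx Hv.
  + case: t => [a th | k' ts | o r t'] /= [Hv Hs]; try discriminate.
    * case: Hs => E; subst k'; move/and4P: Hv => [_ H _ _].
      by rewrite H in HA.
    * case: Hs => E; subst o; move/and5P: Hv => [_ _ Hr /eqP E /andP [Hs Hv]].
      exists r, t'; split => //; have [_ _ [_ HT _]] := Hrule r Hr E.
      by apply/HT; split => //; move/eqP: Hs.
- move=> t /In_ORtrees [r [t' [-> Hr E Ht']]] /=.
  have [Hm _ _] := Hrule r Hr E.
  rewrite (sc_node wf Hk); have W := wf_node wf Hk; have C := cmp k Hk.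
  move: Hm Ht' W C; move: (rl r) => rule.
  case: (nth nd0 S k) => [i b | ch | [|c [|c' ch]]] //=.
  + rewrite inE => /eqP -> /= [<-|] // _ _; exists [:: (i, b)].
    by rewrite enum_set1.
  + case/mapP=> c Hc -> /= Ht' [_ [H1 _]] C.
    have [_ _ Hl _ _] := IH c.1 (H1 c Hc); have [lits [E1 E2]] := Hl t' Ht'.
    exists lits; split => //; rewrite (bigcup_const (B := sc S c.1)) //.
      by case: (ch) Hc.
    move=> c0 /In_map [c1 [/In_mem Hc1 ->]]; exact: C c1 c Hc1 Hc.
  + rewrite inE => /eqP -> /= Ht' [_ H1] _.
    have [_ _ Hl _ _] := IH c (H1 c (mem_head _ _)); have [lits [E1 E2]] := Hl t' Ht'.
    by exists lits; rewrite big_seq1.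
- move=> t /In_ORtrees [r [t' [-> Hr E Ht']]] /=.
  have [_ Hp [_ _ Hn]] := Hrule r Hr E.
  by rewrite mulr_ge0 // Hn.
- move=> f.
  rewrite /ORtrees big_flatten big_map.
  under eq_bigr do rewrite big_map /= -big_distrr /=.
  rewrite big_filter.
  have -> : \sum_(r <- iota 0 (size (rulesS S)) | (rl r).1.1 == k)
       (rl r).2 * \sum_(t <- TR L (rl r).1.2 | consL f (pleaves t)) pprob G t =
     \sum_(rule <- rulesS S | rule.1.1 == k)
       rule.2 * \sum_(t <- TR L rule.1.2 | consL f (pleaves t)) pprob G t.
    by rewrite (big_nth (or_rule0 R)) /index_iota subn0.
  rewrite sum_rules_head // (gv_node wf f Hk).
  have W := wf_node wf Hk; have Uk := gv_node wf (@ftrue d) Hk.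
  move: HA W Uk; rewrite /isAndS.
  case: (nth nd0 S k) => [i b | ch | [|c [|c' ch]]] //=.
  + move=> _ _ Uk; rewrite big_seq1 /= /u Uk /ftrue divr1 big_cons big_nil.
    have := consL_mk f [:: (i, b)]; rewrite /= andbT => ->.
    by case: (f i b); rewrite /= ?mul1r ?addr0.
  + move=> _ [_ [H1 _]] _; rewrite big_map mulr_suml; apply: eq_big_seq => c Hc /=.
    have [_ _ _ _ Hs] := IH c.1 (H1 c Hc); rewrite Hs.
    have := u_gt0 wf (ltn_trans (H1 c Hc) Hk); rewrite lt0r => /andP [Hu _].
    have Huk : u S k != 0 by rewrite lt0r_neq0 // u_gt0.
    by field; rewrite Hu Huk.
  + by move=> _ [].
  + move=> _ [_ H1] Uk; rewrite big_seq1 /= mul1r !big_seq1 /u Uk big_seq1.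
    by have [_ _ _ _ Hs] := IH c (H1 c (mem_head _ _)); rewrite Hs.
Qed.

Definition prod_ch k := match nth nd0 S k with SProd ch => ch | _ => [::] end.
Definition ANDtrees L k : seq tree := map (PA k) (cart (map (nth [::] L) (prod_ch k))).

Lemma F2char L ch ts :
  (forall c, c \in ch -> forall t, List.In t (nth [::] L c) <-> pvalid G t /\ psym t = inr c) ->
  (List.Forall2 (fun t L => List.In t L) ts (map (nth [::] L) ch) <->
   (map (@psym unit) ts == map inr ch) && all id (map (pvalid G) ts)).
Proof.
elim: ch ts => [|c ch IH] [|t ts] H /=.
- by split => // _; constructor.
- by split => // H'; inversion H'.
- by split => // H'; inversion H'.
- rewrite List.Forall2_cons_iff eqseq_cons IH; last first.
    by move=> c' Hc'; apply: H; rewrite in_cons Hc' orbT.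
  rewrite (H c (mem_head _ _)); split.
  + by case=> [[-> ->]] /andP [-> ->]; rewrite eqxx.
  + case/andP=> /andP [/eqP Hs H1] /andP [Hv H2]; split; first by [].
    by rewrite H1 H2.
Qed.

Lemma F2lits L ch ts :
  List.Forall2 (fun t L => List.In t L) ts (map (nth [::] L) ch) ->
  (forall c, c \in ch -> forall t, List.In t (nth [::] L c) ->
     exists lits, pleaves t = map (@mk d) lits /\ perm_eq (map fst lits) (enum (sc S c))) ->
  exists lits, flatten (map (@pleaves unit) ts) = map (@mk d) lits /\
     perm_eq (map fst lits) (flatten [seq enum (sc S c) | c <- ch]).
Proof.
elim: ch ts => [|c ch IH] [|t ts] /= HF H; try by inversion HF.
  by exists [::].
move/List.Forall2_cons_iff: HF => [Ht HF].
have [l1 [E1 P1]] := H c (mem_head _ _) _ Ht.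
have [l2 [E2 P2]] : exists lits, flatten (map (@pleaves unit) ts) = map (@mk d) lits /\
     perm_eq (map fst lits) (flatten [seq enum (sc S c) | c <- ch]).
  by apply: IH => // c' Hc'; apply: H; rewrite in_cons Hc' orbT.
exists (l1 ++ l2); rewrite /= E1 E2 !map_cat; split => //.
exact: perm_cat.
Qed.

Lemma F2nonneg ts (Ls : seq (seq tree)) :
  List.Forall2 (fun t L => List.In t L) ts Ls ->
  (forall L t, List.In L Ls -> List.In t L -> 0 <= pprob G t) -> 0 <= \prod_(t <- ts) pprob G t.
Proof.
elim=> [|t L' ts' Ls' Ht HF IH] H; first by rewrite big_nil.
rewrite big_cons mulr_ge0 //; first by apply: (H L') => //; left.
by apply: IH => L'' t' HL; apply: H; right.
Qed.

Lemma all_flatten' (T : Type) (a : pred T) (s : seq (seq T)) : all a (flatten s) = all (all a) s.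
Proof. by elim: s => //= x s IH; rewrite all_cat IH. Qed.

Lemma and_step (wf : wf_spn S) (dec : decomposable_spn S) L k : (k < size S)%N -> isAndS S k ->
  (forall c, (c < k)%N -> Good c (nth [::] L c)) -> Good k (ANDtrees L k).
Proof.
move=> Hk HA IH.
have [ch [Ek Hch]] : exists ch, nth nd0 S k = SProd d R ch /\ (1 < size ch)%N.
  by move: HA; rewrite /isAndS; case: (nth nd0 S k) => // ch H; exists ch.
have W := wf_node wf Hk; rewrite Ek in W; case: W => _ Hlt.
have Hpc : prod_ch k = ch by rewrite /prod_ch Ek.
rewrite /ANDtrees Hpc.
have IHc c : c \in ch -> Good c (nth [::] L c) := fun Hc => IH c (Hlt c Hc).
have Hch' c : c \in ch -> forall t, List.In t (nth [::] L c) <-> pvalid G t /\ psym t = inr c.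
  by move=> Hc; have [] := IHc c Hc.
split.
- apply: NoDup_map_inj; first by move=> x y [].
  apply: NoDup_cart => L' /In_map [c [/In_mem Hc ->]]; by have [] := IHc c Hc.
- move=> t; split.
  + move/In_map => [ts [/In_cart Hts ->]] /=; split => //.
    by rewrite Hk HA /and_chS Ek /=; exact: (proj1 (F2char ts Hch') Hts).
  + case: t => [a th | k' ts | o r t'] /= [Hv Hs]; try discriminate.
    * case: Hs => E; subst k'; apply/In_map; exists ts; split => //.
      apply/In_cart; apply: (proj2 (F2char ts Hch')); move/and4P: Hv => [_ _ H1 H2].
      by rewrite /and_chS Ek in H1; rewrite H1 H2.
    * case: Hs => E; subst o; move/and5P: Hv => [_ H _ _ _].
      by rewrite HA in H.
- move=> t /In_map [ts [/In_cart Hts ->]] /=.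
  have [lits [E1 E2]] := F2lits Hts (fun c Hc => let: And5 _ _ H _ _ := IHc c Hc in H).
  exists lits; split => //; rewrite (sc_node wf Hk) Ek.
  apply: seq.perm_trans E2 _; apply: (flat_enum_perm (x0 := 0%N)).
  by have := dec k Hk; rewrite Ek.
- move=> t /In_map [ts [/In_cart Hts ->]] /=; rewrite foldrE big_map.
  apply: F2nonneg Hts _ => L' t' /In_map [c [/In_mem Hc ->]] Ht'.
  by have [_ _ _ Hn _] := IHc c Hc; apply: Hn.
- move=> f; rewrite big_map.
  transitivity (\sum_(ts <- cart (map (nth [::] L) ch) | all (fun t => consL f (pleaves t)) ts)
                   \prod_(t <- ts) pprob G t).
    apply: eq_big => ts /=; first by rewrite /consL all_flatten' all_map.
    by move=> _; rewrite foldrE big_map.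
  rewrite sum_cart big_map (gv_node wf f Hk) /u (gv_node wf (@ftrue d) Hk) Ek -prodf_div.
  apply: eq_big_seq => c Hc.
  by have [_ _ _ _ Hs] := IHc c Hc; rewrite Hs.
Qed.

Definition Tk L k := if isAndS S k then ANDtrees L k else ORtrees L k.

Lemma build (wf : wf_spn S) (cmp : complete_spn S) (dec : decomposable_spn S) k :
  (k <= size S)%N -> exists L, forall c, (c < k)%N -> Good c (nth [::] L c).
Proof.
elim: k => [|k IH] Hk; first by exists [::].
have [L HL] := IH (ltnW Hk).
exists (set_nth [::] L k (Tk L k)) => c Hc.
rewrite nth_set_nth /=; case: eqP => [->|Hne].
- rewrite /Tk; case: ifP => HA.
  + exact: and_step.
  + by apply: or_step => //; rewrite HA.
- by apply: HL; move: Hc Hne; rewrite ltnS leq_eqVlt => /orP [/eqP|].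
Qed.

End Main.


Lemma eq_big_In (R : Type) (idx : R) (op : R -> R -> R) (T : Type) (s : seq T)
    (P1 P2 : pred T) (F1 F2 : T -> R) :
  (forall t, List.In t s -> P1 t = P2 t) -> (forall t, List.In t s -> F1 t = F2 t) ->
  \big[op/idx]_(t <- s | P1 t) F1 t = \big[op/idx]_(t <- s | P2 t) F2 t.
Proof.
elim: s => [|t s IH] HP HF; first by rewrite !big_nil.
rewrite !big_cons HP ?HF; try by left.
by rewrite IH // => t' Ht'; [apply: HP | apply: HF]; right.
Qed.

Lemma unique_y (d : nat) (lits : seq ('I_d * bool)) :
  perm_eq (map fst lits) (enum [set: 'I_d]) ->
  exists y0 : {ffun 'I_d -> bool}, forall y : {ffun 'I_d -> bool}, all (fun ib => y ib.1 == ib.2) lits = (y == y0).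
Proof.
move=> P.
have Hu : uniq (map fst lits) by rewrite (perm_uniq P) enum_uniq.
have Hin i : i \in map fst lits by rewrite (perm_mem P) mem_enum in_setT.
exists [ffun i => (nth (i, false) lits (index i (map fst lits))).2] => y.
apply/idP/eqP.
- move/allP=> H; apply/ffunP => i; rewrite ffunE.
  have Hj : (index i (map fst lits) < size lits)%N by rewrite -(size_map fst) index_mem Hin.
  have := H _ (mem_nth (i, false) Hj).
  have E : (nth (i, false) lits (index i (map fst lits))).1 = i.
    by rewrite -(nth_map (i, false) i fst Hj) nth_index.
  by rewrite E => /eqP.
- move=> ->; apply/allP => ib Hib; rewrite ffunE.
  have Hj : (index ib lits < size lits)%N by rewrite index_mem.
  have Ej : nth ib.1 (map fst lits) (index ib lits) = ib.1 by rewrite (nth_map ib) // nth_index.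
  by rewrite -{2}Ej index_uniq ?size_map // nth_index.
Qed.

Lemma mem_pmap_T (aT : Type) (rT : eqType) (f : aT -> option rT) s u :
  Some u \in map f s -> u \in pmap f s.
Proof.
elim: s => //= x s IH; case: (f x) => [y|] /=; rewrite in_cons.
- case/orP => [/eqP [->]|H]; first by rewrite eqxx.
  by rewrite IH ?orbT.
- by case/orP => [//|]; exact: IH.
Qed.

Section Final.
Variables (R : realFieldType) (d : nat) (S : spn d R).
Local Notation nd0 := (SProd d R [::]).
Local Notation G := (GS S).

Lemma stoch (wf : wf_spn S) : stochastic_aog G.
Proof.
split => /=.
- by case: (size S) (proj1 wf).
- move=> k Hk HA; have W := wf_node wf Hk; move: HA W; rewrite /isAndS /and_chS.
  case: (nth nd0 S k) => // ch H [_ Hlt]; rewrite size_map; split => //.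
  by rewrite all_map; apply/allP => c Hc /=; apply: ltn_trans (Hlt c Hc) Hk.
- move=> r Hr; have [H1 H2 H3 H4] := rule_props wf Hr; split => //.
  by move: H3; rewrite /sym_ok /=; case: (r.1.2) => //= c Hc; apply: ltn_trans Hc H1.
- move=> k Hk HA; rewrite /or_prob_sum /= (sum_rules_head (S:=S) (fun r => r.2)) //.
  have W := wf_node wf Hk; have Uk := gv_node wf (@ftrue d) Hk.
  move: HA W Uk; rewrite /isAndS.
  case: (nth nd0 S k) => [i b | ch | [|c [|c' ch]]] //=.
  + by move=> _ _ _; rewrite big_seq1.
  + move=> _ _ Uk; rewrite big_map -mulr_suml /= -Uk divff //.
    by rewrite lt0r_neq0 // u_gt0.
  + by move=> _ [].
  + by move=> _ _ _; rewrite big_seq1.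
Qed.

Lemma d_le (wf : wf_spn S) (full : full_scope_spn S) : (d <= size S)%N.
Proof.
pose f := fun nd : snode d R => if nd is SLeaf i _ then Some i else None.
set lv := pmap f S.
have Hsc k : (k < size S)%N -> sc S k \subset [set i in lv].
  elim/ltn_ind: k => k IH Hk; rewrite (sc_node wf Hk); have W := wf_node wf Hk.
  have Hmem : f (nth nd0 S k) \in map f S.
    by rewrite -(nth_map nd0 None f Hk); apply: mem_nth; rewrite size_map.
  have Hcup (X : eqType) (A : X -> {set 'I_d}) (s : seq X) :
      (forall c, c \in s -> A c \subset [set i in lv]) ->
      \bigcup_(c <- s) A c \subset [set i in lv].
    move=> H; rewrite big_seq; apply: (big_ind (fun X : {set 'I_d} => is_true (X \subset [set i in lv]))).
    - exact: sub0set.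
    - by move=> X1 X2 H1 H2; rewrite subUset H1 H2.
    - exact: H.
  move: Hmem W; case: (nth nd0 S k) => [i b | ch | ch] Hmem W.
  - by rewrite sub1set inE /lv; apply: mem_pmap_T.
  - apply: Hcup => c /mapP [c' Hc' ->]; case: W => _ [H1 _].
    by apply: IH; [apply: H1 | apply: ltn_trans (H1 _ Hc') Hk].
  - apply: Hcup => c Hc; case: W => _ H1.
    by apply: IH; [apply: H1 | apply: ltn_trans (H1 _ Hc) Hk].
have Hk : ((size S).-1 < size S)%N by case: (size S) (proj1 wf).
have := Hsc _ Hk; rewrite /sc full => /subset_leq_card.
rewrite cardsT card_ord cardsE => H.
apply: leq_trans H _; apply: leq_trans (card_size _) _.
by rewrite size_pmap count_size.
Qed.

Lemma sum_succ (s : seq (snode d R)) :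
  (\sum_(nd <- s) (size (node_children nd)).+1 = size s + \sum_(nd <- s) size (node_children nd))%N.
Proof. elim: s => [|nd s IH]; rewrite ?big_nil ?big_cons //= IH; lia. Qed.

Lemma sum_nth_ord (g : snode d R -> nat) :
  (\sum_(k < size S) g (nth nd0 S k) = \sum_(nd <- S) g nd)%N.
Proof. by rewrite (big_nth nd0) big_mkord. Qed.

Lemma size_bound (wf : wf_spn S) (full : full_scope_spn S) : (aog_size G <= 6 * spn_size S)%N.
Proof.
rewrite /aog_size /spn_size /=.
set g := fun nd : snode d R => (size (node_children nd)).+1.
have HA : (\sum_(k < size S | isAndS S k) (size (and_chS S k)).+1 <= \sum_(k < size S) g (nth nd0 S k))%N.
  rewrite big_mkcond; apply: leq_sum => k _; rewrite /isAndS /and_chS /g.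
  by case: (nth nd0 S k) => // ch; case: ifP => //; rewrite size_map.
have HB : (size (rulesS S) <= \sum_(k < size S) g (nth nd0 S k))%N.
  rewrite /rulesS size_flatten sumnE /shape !big_map -(big_mkord xpredT (fun k => g (nth nd0 S k))).
  rewrite /index_iota subn0; apply: leq_sum => k _; rewrite /g.
  case: (nth nd0 S k) => [i b | ch | [|c [|c' ch]]] //=.
  by rewrite !size_map.
have HC : (\sum_(k < size S) g (nth nd0 S k) = size S + \sum_(nd <- S) size (node_children nd))%N.
  by rewrite sum_nth_ord sum_succ.
have HD := d_le wf full.
rewrite HC in HA HB; move: HA HB HD.
move: (\sum_(nd <- S) size (node_children nd)) => C.
move: (\sum_(k < size S | isAndS S k) (size (and_chS S k)).+1) => X.
move: (size (rulesS S)) => Y; lia.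
Qed.

End Final.


Section Marg.
Variables (R : realFieldType) (d : nat) (S : spn d R).
Local Notation G := (GS S).

Lemma spn_val_gv y : spn_val S y = gv S (fun i b => y i == b) (size S).-1.
Proof. by rewrite /spn_val -nth_last node_vals_gv size_fr. Qed.

Lemma marginal (wf : wf_spn S) (cmp : complete_spn S) (dec : decomposable_spn S)
  (full : full_scope_spn S) (x : {ffun 'I_d -> bool}) :
  aog_marginal G (sample_of x) (spn_prob S x).
Proof.
have [L HL] := build wf cmp dec (leqnn (size S)).
set kr := (size S).-1.
have Hkr : (kr < size S)%N by rewrite /kr; case: (size S) (proj1 wf).
have [ND Hmem Hlits Hnn Hsum] := HL kr Hkr.
set T := nth [::] L kr in ND Hmem Hlits Hnn Hsum.
have Hfull : sc S kr = setT by [].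
have HlitsT t : List.In t T -> exists lits, pleaves t = map (@mk d) lits /\
     perm_eq (map fst lits) (enum [set: 'I_d]).
  by move=> Ht; have [lits [E1 E2]] := Hlits t Ht; exists lits; rewrite -Hfull.
have Hu : u S kr != 0 by rewrite lt0r_neq0 // u_gt0.
have Hone : \sum_(t <- T) pprob G t = 1.
  rewrite -(divff Hu) -Hsum; apply: eq_big_In => // t Ht.
  have [lits [-> _]] := HlitsT t Ht; rewrite consL_mk; by symmetry; apply/allP.
have HZ : \sum_(y : {ffun 'I_d -> bool}) gv S (fun i b => y i == b) kr = u S kr.
  have H1 : \sum_(y : {ffun 'I_d -> bool}) gv S (fun i b => y i == b) kr / u S kr = 1.
    under eq_bigr do rewrite -Hsum big_mkcond.
    rewrite exchange_big /= -Hone; apply: eq_big_In => // t Ht.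
    have [lits [E1 E2]] := HlitsT t Ht; have [y0 Hy0] := unique_y E2.
    under eq_bigr do rewrite E1 consL_mk Hy0.
    by rewrite -big_mkcond big_pred1_eq.
  by rewrite -[LHS](divfK Hu) mulr_suml H1 mul1r.
set Lp := [seq t <- T | consL (fun i b => x i == b) (pleaves t)].
have HV : \sum_(t <- Lp) pprob G t = spn_prob S x.
  by rewrite big_filter Hsum /spn_prob spn_val_gv -/kr; under eq_bigr do rewrite spn_val_gv; rewrite HZ.
have HA t : List.In t Lp <-> is_parse G (sample_of x) t.
  rewrite In_filter; split.
  - case=> Ht Hc; have [Hv Hs] := (Hmem t).1 Ht; split => //.
    have [lits [E1 E2]] := HlitsT t Ht.
    rewrite E1 consL_mk in Hc; rewrite E1.
    have -> : map (@mk d) lits = [seq (lit_term i (x i), tt) | i <- map fst lits].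
      rewrite -map_comp; apply/eq_in_map => -[i b] Hib /=.
      by move/allP: Hc => /(_ _ Hib) /= /eqP ->.
    apply: perm_Permutation; rewrite /sample_of; apply: perm_map.
    by rewrite enum_setT -enumT in E2.
  - case=> Hv Hs Hp; split; first by apply/Hmem.
    apply/allP => p Hp'.
    have := Permutation_in _ Hp (proj2 (In_mem p (pleaves t)) Hp').
    move=> /In_mem; rewrite /sample_of => /mapP [i _ ->].
    by apply/existsP; exists (i, x i); rewrite /mk /= !eqxx.
split.
- move=> v [l [Hnd [Hin ->]]]; rewrite -HV; apply: sum_le_NoDup => //.
  + by move=> t /In_filter [Ht _]; apply: Hnn.
  + by move=> t /Hin /HA.
- move=> w Hw; rewrite -HV; apply: Hw; exists Lp; split; first exact: NoDup_filter'.
  by split => // t /HA.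
Qed.
End Marg.

Theorem mainTheorem9 :
  exists c : nat,
    forall (R : realFieldType) (d : nat) (S : spn d R),
      wf_spn S -> complete_spn S -> decomposable_spn S -> full_scope_spn S ->
      exists G : aog unit R,
        [/\ stochastic_aog G,
            (aog_size G <= c * spn_size S)%N &
            forall x : {ffun 'I_d -> bool},
              aog_marginal G (sample_of x) (spn_prob S x)].
Proof.
exists 6%N => R d S wf cmp dec full; exists (GS S); split.
- exact: stoch.
- exact: size_bound.
- exact: marginal.
Qed.
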